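(* Let $P,PA$ be labelings and $c$ a command with $P;PA\vdash_{\mathtt{true}}c$, and let $\rho_1\sim_P\rho_2$ and $\mu_1\sim_{PA}\mu_2$. Then $\langle c,\rho_1,\mu_1,\mathtt{true}\rangle\approx_i\langle c,\rho_2,\mu_2,\mathtt{true}\rangle$, i.e., for every directive list $D$ and observation lists $O_1,O_2$, if $\langle c,\rho_k,\mu_k,\mathtt{true}\rangle\xrightarrow[D]{O_k}{}_i^*$ some configuration for $k=1,2$ (ideal semantics w.r.t. $P$), then $O_1=O_2$.
   Context: Language AWhile: scalar variables $X\in\mathcal V$, arrays $a\in\mathcal A$; $e::=n\mid X\mid\mathrm{op}_{\mathbb N}(e,\dots,e)\mid be\,?\,e_1:e_2$; $be::=\mathtt{true}\mid\mathtt{false}\mid\mathrm{cmp}(e,e)\mid\mathrm{op}_{\mathbb B}(be,\dots,be)$; $c::=\mathtt{skip}\mid X:=e\mid c_1;c_2\mid\mathtt{if}\ be\ \mathtt{then}\ c_1\ \mathtt{else}\ c_2\mid\mathtt{while}\ be\ \mathtt{do}\ c\mid X\leftarrow a[e]\mid a[e]\leftarrow e'$. Scalar state $\rho:\mathcal V\to\mathbb N$; array state $\mu$ with sizes $|a|_\mu$ and values $\mu(a)[i]$; $[\![\cdot]\!]_\rho$ pure evaluation. Labels: $\mathtt{true}$=public, $\mathtt{false}$=secret; $\ell_1\sqsubseteq\ell_2$ iff $\ell_2=\mathtt{true}\Rightarrow\ell_1=\mathtt{true}$; $\ell_1\sqcup\ell_2=\ell_1\wedge\ell_2$. $P:\mathcal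 V\to$ labels, $PA:\mathcal A\to$ labels; $P(e),P(be)$ public iff all variables occurring are public. $\rho_1\sim_P\rho_2$ iff they agree on all public scalar variables; $\mu_1\sim_{PA}\mu_2$ iff they agree on sizes and contents of all public arrays. IFC typing $P;PA\vdash_{pc}c$: $\mathtt{skip}$; $X:=e$ if $pc\sqcup P(e)\sqsubseteq P(X)$; $c_1;c_2$ if both typed under $pc$; $\mathtt{if}$ if both branches typed under $pc\sqcup P(be)$; $\mathtt{while}$ if body typed under $pc\sqcup P(be)$; $X\leftarrow a[i]$ if $pc\sqcup P(i)\sqcup PA(a)\sqsubseteq P(X)$; $a[i]\leftarrow e$ if $pc\sqcup P(i)\sqcup P(e)\sqsubseteq PA(a)$. Ideal semantics w.r.t. $P$: configurations $\langle c,\rho,\mu,\beta\rangle$; steps $\xrightarrow[d]{o}{}_i$ with optional observation $o\in\{\mathrm{branch}(v),\mathrm{read}(a,i),\mathrm{write}(a,i)\}$ and optional directive $d\in\{\mathit{step},\mathit{force},\mathrm{load}(a',j),\mathrm{store}(a',j)\}$. $X:=e\to\mathtt{skip}$ with $\rho[X\mapsto[\![e]\!]_\rho]$; $c_1;c_2\to c_1';c_2$ whenever $c_1\to c_1'$; $\mathtt{skip};c\to c$; $\mathtt{while}\ be\ \mathtt{do}\ c\to\mathtt{if}\ be\ \mathtt{then}\ (c;\mathtt{while}\ be\ \mathtt{do}\ c)\ \mathtt{else}\ \mathtt{skip}$ (no obs/directive, flag kept). Conditional: $v=(P(be)\vee\neg\beta)\wedge[\![be]\!]_\rho$; $\mathit{step}$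 goes to branch $v$; $\mathit{force}$ goes to branch $\neg v$ and sets $\beta:=\mathtt{true}$; obs $\mathrm{branch}(v)$. Read $X\leftarrow a[ie]$ with $\mathit{step}$: $i=0$ if $(P(ie)=\mathtt{false}\vee P(X)=\mathtt{true})\wedge\beta$, else $[\![ie]\!]_\rho$; requires $i<|a|_\mu$; $X:=\mu(a)[i]$; obs $\mathrm{read}(a,i)$. Read with $\mathrm{load}(a',j)$: requires $\beta=\mathtt{true}$, $P(ie)=\mathtt{true}$, $P(X)=\mathtt{false}$, $i=[\![ie]\!]_\rho\ge|a|_\mu$, $j<|a'|_\mu$; $X:=\mu(a')[j]$; obs $\mathrm{read}(a,i)$. Write $a[ie]\leftarrow ae$ with $\mathit{step}$: $i=0$ if $(P(ie)=\mathtt{false}\vee P(ae)=\mathtt{false})\wedge\beta$, else $[\![ie]\!]_\rho$; requires $i<|a|_\mu$; $\mu[a[i]\mapsto[\![ae]\!]_\rho]$; obs $\mathrm{write}(a,i)$. Write with $\mathrm{store}(a',j)$: requires $\beta=\mathtt{true}$, $P(ie)=P(ae)=\mathtt{true}$, $i\ge|a|_\mu$, $j<|a'|_\mu$; $\mu[a'[j]\mapsto[\![ae]\!]_\rho]$; obs $\mathrm{write}(a,i)$. Multi-step $\xrightarrow[D]{O}{}_i^*$ is the reflexive-transitive closure collecting directives $D$ and observations $O$. *)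

(* Defs.v *)
From Stdlib Require Import String List Bool Arith.
Import ListNotations.

Definition var := string.
Definition arr := string.

Inductive aexp : Type :=
  | ANum (n : nat)
  | AId (x : var)
  | AOp (f : list nat -> nat) (args : list aexp)
  | ACond (b : bexp) (e1 e2 : aexp)
with bexp : Type :=
  | BTrue
  | BFalse
  | BCmp (f : nat -> nat -> bool) (e1 e2 : aexp)
  | BOp (f : list bool -> bool) (args : list bexp).

Inductive com : Type :=
  | Skip
  | Asgn (x : var) (e : aexp)
  | Seq (c1 c2 : com)
  | If (b : bexp) (c1 c2 : com)
  | While (b : bexp) (c : com)
  | ARead (x : var) (a : arr) (i : aexp)
  | AWrite (a : arr) (i : aexp) (e : aexp).

Definition state := var -> nat.
Definition astate := arr -> list nat.    (* mu: |a| = length (mu a), mu(a)[i] = nth i (mu a) 0 *)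

Fixpoint aeval (rho : state) (e : aexp) : nat :=
  match e with
  | ANum n => n
  | AId x => rho x
  | AOp f args => f (map (aeval rho) args)
  | ACond b e1 e2 => if beval rho b then aeval rho e1 else aeval rho e2
  end
with beval (rho : state) (b : bexp) : bool :=
  match b with
  | BTrue => true
  | BFalse => false
  | BCmp f e1 e2 => f (aeval rho e1) (aeval rho e2)
  | BOp f args => f (map (beval rho) args)
  end.

(* Labels: true = public, false = secret. *)
Definition label := bool.
Definition lab_le (l1 l2 : label) : Prop := l2 = true -> l1 = true.
Definition lab_join (l1 l2 : label) : label := l1 && l2.

Definition pub_vars := var -> label.
Definition pub_arrs := arr -> label.

Fixpoint alabel (P : pub_vars) (e : aexp) : label :=
  match e with
  | ANum _ => true
  | AId x => P x
  | AOp _ args => forallb (alabel P) args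
  | ACond b e1 e2 => blabel P b && alabel P e1 && alabel P e2
  end
with blabel (P : pub_vars) (b : bexp) : label :=
  match b with
  | BTrue | BFalse => true
  | BCmp _ e1 e2 => alabel P e1 && alabel P e2
  | BOp _ args => forallb (blabel P) args
  end.

Definition pub_equiv (P : pub_vars) (r1 r2 : state) : Prop :=
  forall x, P x = true -> r1 x = r2 x.

Definition pub_equiv_arr (PA : pub_arrs) (m1 m2 : astate) : Prop :=
  forall a, PA a = true -> m1 a = m2 a.

Inductive well_typed (P : pub_vars) (PA : pub_arrs) : label -> com -> Prop :=
  | WT_Skip pc : well_typed P PA pc Skip
  | WT_Asgn pc x e :
      lab_le (lab_join pc (alabel P e)) (P x) ->
      well_typed P PA pc (Asgn x e)
  | WT_Seq pc c1 c2 :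
      well_typed P PA pc c1 -> well_typed P PA pc c2 ->
      well_typed P PA pc (Seq c1 c2)
  | WT_If pc b c1 c2 :
      well_typed P PA (lab_join pc (blabel P b)) c1 ->
      well_typed P PA (lab_join pc (blabel P b)) c2 ->
      well_typed P PA pc (If b c1 c2)
  | WT_While pc b c :
      well_typed P PA (lab_join pc (blabel P b)) c ->
      well_typed P PA pc (While b c)
  | WT_ARead pc x a i :
      lab_le (lab_join (lab_join pc (alabel P i)) (PA a)) (P x) ->
      well_typed P PA pc (ARead x a i)
  | WT_AWrite pc a i e :
      lab_le (lab_join (lab_join pc (alabel P i)) (alabel P e)) (PA a) ->
      well_typed P PA pc (AWrite a i e).

Inductive observation : Type :=
  | OBranch (v : bool)
  | ORead (a : arr) (i : nat)
  | OWrite (a : arr) (i : nat).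

Inductive direction : Type :=
  | DStep
  | DForce
  | DLoad (a : arr) (j : nat)
  | DStore (a : arr) (j : nat).

Definition upd_state (rho : state) (x : var) (v : nat) : state :=
  fun y => if String.eqb y x then v else rho y.

Fixpoint upd_list (l : list nat) (i : nat) (v : nat) : list nat :=
  match l, i with
  | [], _ => []
  | _ :: t, 0 => v :: t
  | h :: t, S i' => h :: upd_list t i' v
  end.

Definition upd_astate (mu : astate) (a : arr) (i v : nat) : astate :=
  fun b => if String.eqb b a then upd_list (mu a) i v else mu b.

Definition cfg : Type := (com * state * astate * bool)%type.

(* Ideal small-step semantics w.r.t. P; directives and observations are
   lists of length <= 1 (optional). *)
Inductive ideal_step (P : pub_vars) :
  cfg -> list direction -> list observation -> cfg -> Prop :=
  | IS_Asgn x e rho mu b :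
      ideal_step P (Asgn x e, rho, mu, b) [] []
                   (Skip, upd_state rho x (aeval rho e), mu, b)
  | IS_Seq c1 c1' c2 rho mu b rho' mu' b' ds os :
      ideal_step P (c1, rho, mu, b) ds os (c1', rho', mu', b') ->
      ideal_step P (Seq c1 c2, rho, mu, b) ds os (Seq c1' c2, rho', mu', b')
  | IS_Seq_Skip c rho mu b :
      ideal_step P (Seq Skip c, rho, mu, b) [] [] (c, rho, mu, b)
  | IS_While be c rho mu b :
      ideal_step P (While be c, rho, mu, b) [] []
                   (If be (Seq c (While be c)) Skip, rho, mu, b)
  | IS_If be c1 c2 rho mu b :
      let v := (blabel P be || negb b) && beval rho be in
      ideal_step P (If be c1 c2, rho, mu, b) [DStep] [OBranch v]
                   (if v then c1 else c2, rho, mu, b)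
  | IS_If_F be c1 c2 rho mu b :
      let v := (blabel P be || negb b) && beval rho be in
      ideal_step P (If be c1 c2, rho, mu, b) [DForce] [OBranch v]
                   (if v then c2 else c1, rho, mu, true)
  | IS_ARead x a ie rho mu b :
      let i := if (negb (alabel P ie) || P x) && b then 0 else aeval rho ie in
      i < length (mu a) ->
      ideal_step P (ARead x a ie, rho, mu, b) [DStep] [ORead a i]
                   (Skip, upd_state rho x (nth i (mu a) 0), mu, b)
  | IS_ARead_U x a ie a' j rho mu :
      let i := aeval rho ie in
      alabel P ie = true -> P x = false ->
      length (mu a) <= i -> j < length (mu a') ->
      ideal_step P (ARead x a ie, rho, mu, true) [DLoad a' j] [ORead a i]
                   (Skip, upd_state rho x (nth j (mu a') 0), mu, true)
  | IS_AWrite a ie e rho mu b :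
      let i := if (negb (alabel P ie) || negb (alabel P e)) && b
               then 0 else aeval rho ie in
      i < length (mu a) ->
      ideal_step P (AWrite a ie e, rho, mu, b) [DStep] [OWrite a i]
                   (Skip, rho, upd_astate mu a i (aeval rho e), b)
  | IS_AWrite_U a ie e a' j rho mu :
      let i := aeval rho ie in
      alabel P ie = true -> alabel P e = true ->
      length (mu a) <= i -> j < length (mu a') ->
      ideal_step P (AWrite a ie e, rho, mu, true) [DStore a' j] [OWrite a i]
                   (Skip, rho, upd_astate mu a' j (aeval rho e), true).

Inductive multi_ideal (P : pub_vars) :
  cfg -> list direction -> list observation -> cfg -> Prop :=
  | MI_refl k : multi_ideal P k [] [] k
  | MI_trans k1 k2 k3 ds1 os1 ds2 os2 :
      ideal_step P k1 ds1 os1 k2 ->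
      multi_ideal P k2 ds2 os2 k3 ->
      multi_ideal P k1 (ds1 ++ ds2) (os1 ++ os2) k3.

(* Main.v *)
Require Import Defs.
From Stdlib Require Import String List Bool Arith.
Import ListNotations.

Section S.
Variable P : pub_vars.
Variables r1 r2 : state.
Hypothesis HE : pub_equiv P r1 r2.

Lemma condeq (b1 b2 : bool) (x1 x2 y1 y2 : nat) :
  b1 = b2 -> x1 = x2 -> y1 = y2 ->
  (if b1 then x1 else y1) = (if b2 then x2 else y2).
Proof. intros -> -> ->; reflexivity. Qed.

Fixpoint ae (e : aexp) : alabel P e = true -> aeval r1 e = aeval r2 e :=
  match e return alabel P e = true -> aeval r1 e = aeval r2 e with
  | ANum n => fun _ => eq_refl
  | AId x => fun H => HE x H
  | AOp f args => fun H =>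
      f_equal f ((fix go (l : list aexp) : forallb (alabel P) l = true ->
                     map (aeval r1) l = map (aeval r2) l :=
         match l return forallb (alabel P) l = true ->
                     map (aeval r1) l = map (aeval r2) l with
         | [] => fun _ => eq_refl
         | a :: t => fun H =>
             f_equal2 (@cons nat) (ae a (proj1 (andb_prop _ _ H)))
                      (go t (proj2 (andb_prop _ _ H)))
         end) args H)
  | ACond b e1 e2 => fun H =>
      let H12 := andb_prop _ _ H in
      let H1 := andb_prop _ _ (proj1 H12) in
      condeq _ _ _ _ _ _ (be b (proj1 H1)) (ae e1 (proj2 H1)) (ae e2 (proj2 H12))
  end
with be (b : bexp) : blabel P b = true -> beval r1 b = beval r2 b :=
  match b return blabel P b = true -> beval r1 b = beval r2 b with
  | BTrue => fun _ => eq_refl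
  | BFalse => fun _ => eq_refl
  | BCmp f e1 e2 => fun H =>
      f_equal2 f (ae e1 (proj1 (andb_prop _ _ H))) (ae e2 (proj2 (andb_prop _ _ H)))
  | BOp f args => fun H =>
      f_equal f ((fix go (l : list bexp) : forallb (blabel P) l = true ->
                     map (beval r1) l = map (beval r2) l :=
         match l return forallb (blabel P) l = true ->
                     map (beval r1) l = map (beval r2) l with
         | [] => fun _ => eq_refl
         | a :: t => fun H =>
             f_equal2 (@cons bool) (be a (proj1 (andb_prop _ _ H)))
                      (go t (proj2 (andb_prop _ _ H)))
         end) args H)
  end.
End S.

Lemma upd_equiv P r1 r2 x v1 v2 :
  pub_equiv P r1 r2 -> (P x = true -> v1 = v2) ->
  pub_equiv P (upd_state r1 x v1) (upd_state r2 x v2).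
Proof.
  unfold pub_equiv, upd_state; intros H Hv y Hy.
  destruct (String.eqb_spec y x); subst; auto.
Qed.

Lemma upd_equiv_sec P r1 r2 x v1 v2 :
  pub_equiv P r1 r2 -> P x = false ->
  pub_equiv P (upd_state r1 x v1) (upd_state r2 x v2).
Proof. intros H Hx; apply upd_equiv; auto; congruence. Qed.

Lemma upda_equiv PA m1 m2 a i v1 v2 :
  pub_equiv_arr PA m1 m2 -> (PA a = true -> v1 = v2) ->
  pub_equiv_arr PA (upd_astate m1 a i v1) (upd_astate m2 a i v2).
Proof.
  unfold pub_equiv_arr, upd_astate; intros H Hv b Hb.
  destruct (String.eqb_spec b a); subst; auto.
  rewrite H, Hv; auto.
Qed.

Fixpoint dlen (c : com) : nat :=
  match c with
  | Skip | Asgn _ _ | While _ _ => 0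
  | Seq Skip _ => 0
  | Seq c1 _ => dlen c1
  | _ => 1
  end.

Lemma step_len P k ds os k' : ideal_step P k ds os k' ->
  forall c r m b, k = (c, r, m, b) -> length ds = dlen c.
Proof.
  induction 1; intros c0 r0 m0 b0 E; inversion E; subst; simpl; auto.
  erewrite IHideal_step; [|reflexivity].
  destruct c1; try (inversion H; fail); reflexivity.
Qed.

Lemma app_len_inv {A} (a1 a2 b1 b2 : list A) :
  a1 ++ b1 = a2 ++ b2 -> length a1 = length a2 -> a1 = a2 /\ b1 = b2.
Proof.
  revert a2; induction a1; destruct a2; simpl; intros; try discriminate; auto.
  inversion H; subst. destruct (IHa1 a2); auto. subst; auto.
Qed.

Lemma wt_mono P PA pc c : well_typed P PA pc c ->
  forall pc', (pc = true -> pc' = true) -> well_typed P PA pc' c.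
Proof.
  unfold lab_le, lab_join.
  induction 1; intros pc' Hp.
  - constructor.
  - constructor. unfold lab_le, lab_join in *. destruct pc, pc'; simpl in *; auto.
    all: first [ (specialize (Hp eq_refl); discriminate) | (intros Hx; specialize (H Hx); discriminate) ].
  - constructor; auto.
  - constructor; [apply IHwell_typed1|apply IHwell_typed2]; unfold lab_join;
    destruct pc, pc'; simpl; auto; intros; discriminate.
  - constructor; apply IHwell_typed; unfold lab_join;
    destruct pc, pc'; simpl; auto; intros; discriminate.
  - constructor. unfold lab_le, lab_join in *. destruct pc, pc'; simpl in *; auto.
    all: first [ (specialize (Hp eq_refl); discriminate) | (intros Hx; specialize (H Hx); discriminate) ].
  - constructor. unfold lab_le, lab_join in *. destruct pc, pc'; simpl in *; auto.
    all: first [ (specialize (Hp eq_refl); discriminate) | (intros Hx; specialize (H Hx); discriminate) ].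
Qed.

Definition rel P PA (k1 k2 : cfg) := exists c r1 m1 r2 m2 pc,
  k1 = (c,r1,m1,true) /\ k2 = (c,r2,m2,true) /\ well_typed P PA pc c /\
  pub_equiv P r1 r2 /\ pub_equiv_arr PA m1 m2.

Lemma step_lock P PA k1 ds os1 k1' : ideal_step P k1 ds os1 k1' ->
  forall k2 os2 k2', rel P PA k1 k2 -> ideal_step P k2 ds os2 k2' ->
  os1 = os2 /\ rel P PA k1' k2'.
Proof.
  induction 1; intros k2 os2 k2' [c0 [r1 [m1 [r2 [m2 [pc [E1 [E2 [WT [HR HM]]]]]]]]]] S2;
  inversion E1; subst; clear E1; inversion S2; subst; try discriminate.
  - inversion WT; subst. split; auto.
    exists Skip, (upd_state r1 x (aeval r1 e)), m1, (upd_state r2 x (aeval r2 e)), m2, pc.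
    repeat split; auto using WT_Skip.
    apply upd_equiv; auto. intros Hx. apply (ae P r1 r2 HR).
    match goal with H : lab_le _ _ |- _ => apply H in Hx end. unfold lab_join in Hx. apply andb_prop in Hx; tauto.
  - inversion WT; subst.
    destruct (IHideal_step (c1, r2, m2, true) os2 (c1'0, rho'0, mu'0, b'0)) as [Eo Hr].
    { exists c1, r1, m1, r2, m2, pc. repeat split; auto. }
    { assumption. }
    split; auto.
    destruct Hr as [c' [r1' [m1' [r2' [m2' [pc' [E1 [E2 [WT' [HR' HM']]]]]]]]]].
    inversion E1; inversion E2; subst.
    exists (Seq c' c2), r1', m1', r2', m2', true. repeat split; auto.
    constructor; [apply (wt_mono _ _ _ _ WT') | apply (wt_mono _ _ _ _ H4)]; auto.
  - inversion H.
  - match goal with H : ideal_step _ (Skip,_,_,_) _ _ _ |- _ => inversion H end.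
  - inversion WT; subst. split; auto. exists c, r1, m1, r2, m2, pc. repeat split; auto.
  - inversion WT; subst. split; auto.
    exists (If be0 (Seq c (While be0 c)) Skip), r1, m1, r2, m2, pc. repeat split; auto.
    constructor; constructor; auto. constructor.
    unfold lab_join in *. rewrite <- andb_assoc, andb_diag. auto.
  - assert (Ev: v = v0).
    { unfold v, v0. simpl. destruct (blabel P be0) eqn:Hb; simpl; auto.
      rewrite (be P r1 r2 HR be0 Hb); auto. }
    clearbody v v0; subst v0. inversion WT; subst. split; auto.
    exists (if v then c1 else c2), r1, m1, r2, m2, (lab_join pc (blabel P be0)).
    repeat split; auto. destruct v; auto.
  - assert (Ev: v = v0).
    { unfold v, v0. simpl. destruct (blabel P be0) eqn:Hb; simpl; auto.
      rewrite (be P r1 r2 HR be0 Hb); auto. }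
    clearbody v v0; subst v0. inversion WT; subst. split; auto.
    exists (if v then c2 else c1), r1, m1, r2, m2, (lab_join pc (blabel P be0)).
    repeat split; auto. destruct v; auto.
  - assert (Ei: i = i0).
    { unfold i, i0. destruct (alabel P ie) eqn:Hi; destruct (P x); simpl; auto.
      apply (ae P r1 r2 HR ie Hi). }
    clearbody i i0; subst i0. split; auto.
    exists Skip, (upd_state r1 x (nth i (m1 a) 0)), m1, (upd_state r2 x (nth i (m2 a) 0)), m2, pc.
    repeat split; auto using WT_Skip. apply upd_equiv; auto. intros Hx.
    inversion WT; subst. unfold lab_le, lab_join in *.
    match goal with H : _ -> _ |- _ => apply H in Hx end.
    rewrite !andb_true_iff in Hx. rewrite HM; tauto.
  - assert (Ei: i = i0) by (apply (ae P r1 r2 HR ie H)).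
    clearbody i i0; subst i0. split; auto.
    exists Skip, (upd_state r1 x (nth j (m1 a') 0)), m1, (upd_state r2 x (nth j (m2 a') 0)), m2, pc.
    repeat split; auto using WT_Skip. apply upd_equiv_sec; auto.
  - assert (Ei: i = i0).
    { unfold i, i0. destruct (alabel P ie) eqn:Hi; destruct (alabel P e); simpl; auto.
      apply (ae P r1 r2 HR ie Hi). }
    clearbody i i0; subst i0. split; auto.
    exists Skip, r1, (upd_astate m1 a i (aeval r1 e)), r2, (upd_astate m2 a i (aeval r2 e)), pc.
    repeat split; auto using WT_Skip. apply upda_equiv; auto. intros Hx.
    inversion WT; subst. unfold lab_le, lab_join in *.
    match goal with H : _ -> _ |- _ => apply H in Hx end.
    rewrite !andb_true_iff in Hx. apply (ae P r1 r2 HR); tauto.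
  - assert (Ei: i = i0) by (apply (ae P r1 r2 HR ie H)).
    clearbody i i0; subst i0. split; auto.
    exists Skip, r1, (upd_astate m1 a' j (aeval r1 e)), r2, (upd_astate m2 a' j (aeval r2 e)), pc.
    repeat split; auto using WT_Skip. apply upda_equiv; auto.
    intros _. apply (ae P r1 r2 HR e H0).
Qed.

Lemma step_olen P k ds os k' : ideal_step P k ds os k' -> length os = length ds.
Proof. induction 1; simpl; auto. Qed.

Lemma multi_olen P k ds os k' : multi_ideal P k ds os k' -> length os = length ds.
Proof.
  induction 1; simpl; auto. rewrite !length_app, IHmulti_ideal.
  apply step_olen in H. congruence.
Qed.

Lemma multi_lock P PA k1 D O1 k1' : multi_ideal P k1 D O1 k1' ->
  forall k2 O2 k2', rel P PA k1 k2 -> multi_ideal P k2 D O2 k2' -> O1 = O2.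
Proof.
  induction 1; intros k2' O2 k2'' Hr M2.
  - apply multi_olen in M2. destruct O2; simpl in *; congruence.
  - inversion M2; subst.
    + apply multi_olen in H0. apply step_olen in H.
      destruct ds1, ds2, os1, os2; simpl in *; try discriminate; auto.
    + rename H2 into S2, H4 into M2', H1 into Eds.
      pose proof Hr as Hr'.
      destruct Hr' as [c [r1 [m1 [r2 [m2 [pc [E1 [E2 _]]]]]]]]; subst.
      pose proof (step_len _ _ _ _ _ H _ _ _ _ eq_refl) as L1.
      pose proof (step_len _ _ _ _ _ S2 _ _ _ _ eq_refl) as L2.
      destruct (app_len_inv _ _ _ _ Eds) as [-> ->]; [congruence|].
      destruct (step_lock _ _ _ _ _ _ H _ _ _ Hr S2) as [-> Hr2].
      f_equal. eapply IHmulti_ideal; eauto.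
Qed.

Theorem lemma5p3 :
  forall (P : pub_vars) (PA : pub_arrs) (c : com),
    well_typed P PA true c ->
    forall (rho1 rho2 : state) (mu1 mu2 : astate),
      pub_equiv P rho1 rho2 ->
      pub_equiv_arr PA mu1 mu2 ->
      forall (D : list direction) (O1 O2 : list observation) (k1 k2 : cfg),
        multi_ideal P (c, rho1, mu1, true) D O1 k1 ->
        multi_ideal P (c, rho2, mu2, true) D O2 k2 ->
        O1 = O2.
Proof.
  intros P PA c WT rho1 rho2 mu1 mu2 HR HM D O1 O2 k1 k2 M1 M2.
  apply (multi_lock P PA _ _ _ _ M1 _ _ _ (ltac:(
  exists c, rho1, mu1, rho2, mu2, true; repeat split; auto)) M2).
Qed.
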